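(* As an identity of formal power series in $x$, \[ \frac{2(2-x)}{(1-x)^2} \sum_{j=0}^\infty f_j\!\left(2-\frac1x, 2-\frac1x\right) = \frac{3}{1-x} + \frac{1-x}{(1-2x)^2}\sum_{j=0}^\infty f_j\!\left(3-\frac1x,3-\frac1x\right). \]
   Context: $(x)_j = x(x+1)\cdots(x+j-1)$ denotes the Pochhammer symbol (with $(x)_0=1$) and $f_j(x,y) = \frac{(j!)^2}{(x)_j (y)_j}$. Note $f_j(2-1/x,2-1/x) = \frac{(j!)^2x^{2j}}{\prod_{i=2}^{j+1}(1-ix)^2}$ and $f_j(3-1/x,3-1/x)=\frac{(j!)^2x^{2j}}{\prod_{i=3}^{j+2}(1-ix)^2}$, which are power series in $x$ of order at least $2j$, so the sums converge formally. *)

(* Defs.v *)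
From mathcomp Require Import all_boot all_order all_algebra.
Set Implicit Arguments. Unset Strict Implicit. Unset Printing Implicit Defensive.
Import GRing.Theory Num.Theory.
Local Open Scope ring_scope.

(* A formal power series in x with rational coefficients: n |-> [x^n] *)
Definition ps := nat -> rat.

Definition ps_add (a b : ps) : ps := fun n => a n + b n.
Definition ps_mul (a b : ps) : ps := fun n => \sum_(k < n.+1) a k * b (n - k)%N.
Definition ps_const (c : rat) : ps := fun n => if n == 0%N then c else 0.
Definition ps_poly (p : {poly rat}) : ps := fun n => p`_n.
Definition ps_Xn (m : nat) : ps := fun n => (n == m)%:R.
(* the power series 1/(1 - c x) = sum_n c^n x^n *)
Definition ps_geom (c : rat) : ps := fun n => c ^+ n.

(* f_j(s - 1/x, s - 1/x) = (j!)^2 x^(2j) / prod_{i=s}^{s+j-1} (1 - i x)^2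
   as a formal power series *)
Definition fterm (s j : nat) : ps :=
  ps_mul (ps_const ((j`! ^ 2)%N)%:R)
    (ps_mul (ps_Xn (2 * j))
       (foldr (fun i acc => ps_mul (ps_geom i%:R) (ps_mul (ps_geom i%:R) acc))
              (ps_const 1) (iota s j))).

(* Formal sum of a family F with ord(F j) >= j: coefficient n is the
   (finite) sum over j <= n. *)
Definition ps_sum (F : nat -> ps) : ps := fun n => \sum_(j < n.+1) F j n.

(* Main.v *)
Require Import Defs.
From mathcomp Require Import all_boot all_order all_algebra.
From Stdlib Require Import Ring FunctionalExtensionality.
Import GRing.Theory.
Local Open Scope ring_scope.

Definition ps_opp (a : ps) : ps := fun n => - a n.
Definition ps_sub (a b : ps) : ps := ps_add a (ps_opp b).
Definition T (N : nat) (a : ps) : {poly rat} := \poly_(i < N.+1) a i.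

Lemma mulT a b n N : (n <= N)%N -> ps_mul a b n = (T N a * T N b)`_n.
Proof.
move=> hn; rewrite coefM; apply: eq_bigr => [[i hi]] _ /=.
rewrite !coef_poly.
have h1 : (i < N.+1)%N by apply: leq_trans hi _.
have h2 : (n - i < N.+1)%N by rewrite ltnS; apply: leq_trans (leq_subr _ _) hn.
by rewrite h1 h2.
Qed.

Lemma coefM_agree (p q r : {poly rat}) n :
  (forall k, (k <= n)%N -> p`_k = q`_k) -> (p * r)`_n = (q * r)`_n.
Proof.
move=> h; rewrite !coefM; apply: eq_bigr => [[i hi]] _ /=.
by rewrite h.
Qed.

Lemma ps_mulC a b : ps_mul a b = ps_mul b a.
Proof.
apply: functional_extensionality => n.
by rewrite !(mulT _ _ _ _ (leqnn n)) mulrC.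
Qed.

Lemma ps_mulA a b c : ps_mul a (ps_mul b c) = ps_mul (ps_mul a b) c.
Proof.
apply: functional_extensionality => n.
rewrite (mulT _ _ _ _ (leqnn n)) (mulT (ps_mul a b) _ _ _ (leqnn n)).
rewrite [in RHS](coefM_agree (T n (ps_mul a b)) (T n a * T n b)); last first.
  move=> k hk; rewrite coef_poly ltnS hk; exact: mulT.
rewrite mulrC (coefM_agree (T n (ps_mul b c)) (T n b * T n c)); last first.
  move=> k hk; rewrite coef_poly ltnS hk; exact: mulT.
by rewrite mulrC mulrA.
Qed.

Lemma ps_mul1 a : ps_mul (ps_const 1) a = a.
Proof.
apply: functional_extensionality => n.
rewrite /ps_mul big_ord_recl /= /ps_const /= mul1r subn0 big1 ?addr0 // => i _.
by rewrite mul0r.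
Qed.

Lemma ps_mulDl a b c : ps_mul (ps_add a b) c = ps_add (ps_mul a c) (ps_mul b c).
Proof.
apply: functional_extensionality => n.
rewrite /ps_mul /ps_add -big_split /=; apply: eq_bigr => i _; by rewrite mulrDl.
Qed.

Lemma ps_ring : ring_theory (ps_const 0) (ps_const 1) ps_add ps_mul ps_sub ps_opp eq.
Proof.
constructor.
- move=> x; apply: functional_extensionality => n; rewrite /ps_add /ps_const; by case: (n == 0%N); rewrite add0r.
- move=> x y; apply: functional_extensionality => n; by rewrite /ps_add addrC.
- move=> x y z; apply: functional_extensionality => n; by rewrite /ps_add addrA.
- exact: ps_mul1.
- exact: ps_mulC.
- exact: ps_mulA.
- exact: ps_mulDl.
- by [].
- move=> x; apply: functional_extensionality => n; rewrite /ps_add /ps_opp /ps_const subrr; by case: (n == 0%N).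
Qed.

Add Ring psRing : ps_ring.


Lemma ps_polyM p q : ps_poly (p * q) = ps_mul (ps_poly p) (ps_poly q).
Proof. apply: functional_extensionality => n; by rewrite /ps_poly coefM. Qed.
Lemma ps_polyD p q : ps_poly (p + q) = ps_add (ps_poly p) (ps_poly q).
Proof. apply: functional_extensionality => n; by rewrite /ps_poly coefD. Qed.
Lemma ps_polyB p q : ps_poly (p - q) = ps_sub (ps_poly p) (ps_poly q).
Proof. apply: functional_extensionality => n; by rewrite /ps_poly coefB. Qed.
Lemma ps_polyC c : ps_poly c%:P = ps_const c.
Proof. apply: functional_extensionality => n; by rewrite /ps_poly coefC. Qed.
Lemma ps_poly1 : ps_poly 1 = ps_const 1.
Proof. by rewrite -polyC1 ps_polyC. Qed.
Lemma ps_XnE m : ps_Xn m = ps_poly 'X^m.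
Proof. apply: functional_extensionality => n; by rewrite /ps_poly coefXn. Qed.
Lemma ps_polyX : ps_poly 'X = ps_Xn 1.
Proof. by rewrite ps_XnE expr1. Qed.
Lemma ps_constM a b : ps_const (a * b) = ps_mul (ps_const a) (ps_const b).
Proof. by rewrite -!ps_polyC polyCM ps_polyM. Qed.
Lemma ps_constD a b : ps_const (a + b) = ps_add (ps_const a) (ps_const b).
Proof. by rewrite -!ps_polyC polyCD ps_polyD. Qed.
Lemma ps_XnS m : ps_Xn m.+1 = ps_mul (ps_Xn m) (ps_Xn 1).
Proof. by rewrite !ps_XnE exprS mulrC ps_polyM. Qed.

Lemma ps_poly_mul_coef p a n : ps_mul (ps_poly p) a n = (p * T n a)`_n.
Proof.
rewrite coefM; apply: eq_bigr => [[i hi]] _ /=.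
by rewrite coef_poly ltnS leq_subr.
Qed.

Lemma Xn_mul m a n : ps_mul (ps_Xn m) a n = if (n < m)%N then 0 else a (n - m)%N.
Proof.
rewrite ps_XnE ps_poly_mul_coef coefXnM; case: ifP => // _.
by rewrite coef_poly ltnS leq_subr.
Qed.

Lemma const_mul c a n : ps_mul (ps_const c) a n = c * a n.
Proof. by rewrite -ps_polyC ps_poly_mul_coef coefCM coef_poly ltnS leqnn. Qed.

Lemma geomP c : ps_mul (ps_sub (ps_const 1) (ps_mul (ps_const c) (ps_Xn 1))) (ps_geom c) = ps_const 1.
Proof.
have -> : ps_mul (ps_sub (ps_const 1) (ps_mul (ps_const c) (ps_Xn 1))) (ps_geom c)
  = ps_sub (ps_geom c) (ps_mul (ps_const c) (ps_mul (ps_Xn 1) (ps_geom c))) by ring.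
apply: functional_extensionality => n.
rewrite /ps_sub /ps_add /ps_opp const_mul Xn_mul /ps_geom /ps_const.
case: n => [|n] /=; first by rewrite mulr0 subr0 expr0.
by rewrite subn1 /= exprS subrr.
Qed.

Definition ord (a : ps) (k : nat) := forall n, (n < k)%N -> a n = 0.

Lemma ord_mul_r a b k : ord b k -> ord (ps_mul a b) k.
Proof.
move=> h n hn; rewrite /ps_mul big1 // => [[i hi]] _ /=.
rewrite h ?mulr0 //; apply: leq_ltn_trans (leq_subr _ _) hn.
Qed.

Lemma ord_mul_l a b k : ord a k -> ord (ps_mul a b) k.
Proof. by rewrite ps_mulC; apply: ord_mul_r. Qed.

Lemma ord_Xn m : ord (ps_Xn m) m.
Proof. by move=> n hn; rewrite /ps_Xn (ltn_eqF hn). Qed.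

Lemma ord_fterm s j : ord (fterm s j) j.
Proof.
move=> n hn; apply: (ord_mul_r _ _ _ (ord_mul_l _ _ _ (ord_Xn (2 * j)))).
by apply: leq_trans hn _; rewrite leq_pmull.
Qed.

Lemma ord_le a k m : ord a k -> (m <= k)%N -> ord a m.
Proof. move=> h hm n hn; apply: h; exact: leq_trans hn hm. Qed.

Lemma sum_mul p F : (forall j, ord (F j) j) ->
  ps_mul p (ps_sum F) = ps_sum (fun j => ps_mul p (F j)).
Proof.
move=> hF; apply: functional_extensionality => n.
rewrite /ps_sum /ps_mul.
rewrite [RHS]exchange_big /=; apply: eq_bigr => [[k hk]] _ /=.
rewrite (big_ord_widen n.+1 (fun j => F j (n - k)%N)); last by rewrite ltnS leq_subr.
rewrite big_distrr /= big_mkcond /=; apply: eq_bigr => [[j hj]] _ /=.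
case: ifP => // /negbT; rewrite -leqNgt => h.
by rewrite hF ?mulr0.
Qed.

Lemma sum_sub F G : ps_sub (ps_sum F) (ps_sum G) = ps_sum (fun j => ps_sub (F j) (G j)).
Proof.
apply: functional_extensionality => n.
by rewrite /ps_sum /ps_sub /ps_add /ps_opp -sumrN -big_split.
Qed.

Lemma sum_tele D : (forall j, ord (D j) j) ->
  ps_sum (fun j => ps_sub (D j.+1) (D j)) = ps_opp (D 0%N).
Proof.
move=> hD; apply: functional_extensionality => n.
rewrite /ps_sum /ps_sub /ps_add /ps_opp.
rewrite -(big_mkord xpredT (fun j => D j.+1 n + - D j n)).
rewrite (telescope_sumr (fun j => D j n)) // hD // add0r.
by [].
Qed.

Local Infix "⊗" := ps_mul (at level 40, left associativity).
Local Infix "⊕" := ps_add (at level 50, left associativity).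
Local Infix "⊖" := ps_sub (at level 50, left associativity).

Definition X := ps_Xn 1.
Local Notation one := (ps_const 1).
Definition cnat (k : nat) := ps_const k%:R.
Definition G (i : nat) := ps_geom i%:R.
Definition Q s j := foldr (fun i acc => ps_mul (ps_geom i%:R) (ps_mul (ps_geom i%:R) acc)) (ps_const 1) (iota s j).
Local Notation two := (one ⊕ one).
Local Notation three := (two ⊕ one).

Lemma ftermE s j : fterm s j = ps_const ((j`! ^ 2)%N)%:R ⊗ (ps_Xn (2 * j) ⊗ Q s j).
Proof. by []. Qed.

Lemma QS s j : Q s j.+1 = G s ⊗ (G s ⊗ Q s.+1 j).
Proof. by []. Qed.

Lemma Q0 s : Q s 0 = one.
Proof. by []. Qed.

Lemma Q_snoc s j : Q s j.+1 = Q s j ⊗ (G (s + j) ⊗ G (s + j)).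
Proof.
elim: j s => [|j IH] s.
  rewrite QS !Q0 addn0. ring.
rewrite QS IH QS -addSnnS; ring.
Qed.

Lemma cnatS k : cnat k.+1 = cnat k ⊕ one.
Proof. by rewrite /cnat -natr1 ps_constD. Qed.

Lemma cnatD a b : cnat (a + b) = cnat a ⊕ cnat b.
Proof. by rewrite /cnat natrD ps_constD. Qed.

Lemma cnat0 : cnat 0 = ps_const 0.
Proof. by []. Qed.

Lemma cnat2 : cnat 2 = two.
Proof. rewrite cnatS cnatS cnat0; ring. Qed.

Lemma cnat3 : cnat 3 = three.
Proof. by rewrite cnatS cnat2. Qed.


Lemma geomG i : (one ⊖ cnat i ⊗ X) ⊗ G i = one.
Proof. exact: geomP. Qed.

Lemma factC j : ps_const (((j.+1)`! ^ 2)%N)%:R = (cnat j ⊕ one) ⊗ (cnat j ⊕ one) ⊗ ps_const ((j`! ^ 2)%N)%:R.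
Proof. by rewrite factS expnMn natrM ps_constM natrM ps_constM -cnatS. Qed.

Lemma Xn0 : ps_Xn 0 = one.
Proof. apply: functional_extensionality => n; by rewrite /ps_Xn /one /ps_const; case: n. Qed.

Definition w := one ⊖ two ⊗ X.
Definition u j := one ⊖ (two ⊕ cnat j) ⊗ X.

Lemma hb j : (w ⊗ w) ⊗ fterm 2 j = (u j ⊗ u j) ⊗ fterm 3 j.
Proof.
have hg2 : w ⊗ G 2 = one by rewrite /w -cnat2 geomG.
have hgu : u j ⊗ G (2 + j) = one by rewrite /u -cnat2 -cnatD geomG.
have hQ := Q_snoc 2 j; rewrite QS in hQ.
rewrite !ftermE.
set c := ps_const ((j`! ^ 2)%N)%:R; set Y := ps_Xn (2 * j).
transitivity ((w ⊗ w) ⊗ (c ⊗ (Y ⊗ Q 2 j)) ⊗ ((u j ⊗ G (2 + j)) ⊗ (u j ⊗ G (2 + j)))).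
  rewrite hgu; ring.
transitivity ((w ⊗ w) ⊗ (u j ⊗ u j) ⊗ c ⊗ Y ⊗ (Q 2 j ⊗ (G (2 + j) ⊗ G (2 + j)))).
  ring.
rewrite -hQ.
transitivity ((u j ⊗ u j) ⊗ (c ⊗ (Y ⊗ Q 3 j)) ⊗ ((w ⊗ G 2) ⊗ (w ⊗ G 2))).
  ring.
rewrite hg2;ring.
Qed.

Lemma fterm_succ s j : fterm s j.+1 = ((cnat j ⊕ one) ⊗ (cnat j ⊕ one) ⊗ ps_const ((j`! ^ 2)%N)%:R) ⊗ (ps_Xn (2 * j) ⊗ X ⊗ X ⊗ (G s ⊗ (G s ⊗ Q s.+1 j))).
Proof.
rewrite ftermE; congr (ps_mul _ _); first exact: factC.
have e2 : (2 * j.+1 = (2 * j).+2)%N by rewrite mulnS.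
rewrite e2 ps_XnS ps_XnS QS -/X; ring.
Qed.

Lemma ha j : (w ⊗ w) ⊗ fterm 2 j.+1 = ((cnat j ⊕ one) ⊗ (cnat j ⊕ one) ⊗ X ⊗ X) ⊗ fterm 3 j.
Proof.
have hg2 : w ⊗ G 2 = one by rewrite /w -cnat2 geomG.
rewrite fterm_succ (ftermE 3 j).
set c := ps_const ((j`! ^ 2)%N)%:R; set Y := ps_Xn (2 * j).
transitivity (((cnat j ⊕ one) ⊗ (cnat j ⊕ one) ⊗ X ⊗ X) ⊗ (c ⊗ (Y ⊗ Q 3 j)) ⊗ ((w ⊗ G 2) ⊗ (w ⊗ G 2))).
  ring.
rewrite hg2;ring.
Qed.

Definition R (k : nat) := ((two ⊗ cnat k ⊕ three) ⊗ X) ⊖ three.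
Definition D (j : nat) := (w ⊗ w) ⊗ (R j ⊗ fterm 2 j).
Local Notation K1 := (two ⊗ (two ⊖ X) ⊗ (w ⊗ w)).
Local Notation K2 := ((one ⊖ X) ⊗ (one ⊖ X) ⊗ (one ⊖ X)).

Lemma Tj j : K1 ⊗ fterm 2 j ⊖ K2 ⊗ fterm 3 j = D j.+1 ⊖ D j.
Proof.
transitivity (two ⊗ (two ⊖ X) ⊗ ((w ⊗ w) ⊗ fterm 2 j) ⊖ K2 ⊗ fterm 3 j); first ring.
rewrite hb.
symmetry.
transitivity (R j.+1 ⊗ ((w ⊗ w) ⊗ fterm 2 j.+1) ⊖ R j ⊗ ((w ⊗ w) ⊗ fterm 2 j)).
  rewrite /D; ring.
rewrite ha hb /R /u cnatS; ring.
Qed.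

Lemma fterm0 s : fterm s 0 = one.
Proof.
rewrite ftermE Xn0 Q0.
have -> : (((0`! ^ 2)%N)%:R : rat) = 1 by [].
ring.
Qed.

Lemma ordD j : ord (D j) j.
Proof. exact: (ord_mul_r _ _ _ (ord_mul_r _ _ _ (ord_fterm 2 j))). Qed.

Lemma Esum : K1 ⊗ ps_sum (fterm 2) = K2 ⊗ ps_sum (fterm 3) ⊕ three ⊗ (one ⊖ X) ⊗ (w ⊗ w).
Proof.
transitivity ((K1 ⊗ ps_sum (fterm 2) ⊖ K2 ⊗ ps_sum (fterm 3)) ⊕ K2 ⊗ ps_sum (fterm 3)); first ring.
rewrite (sum_mul _ _ (ord_fterm 2)) (sum_mul _ _ (ord_fterm 3)) sum_sub.
have -> : (fun j => K1 ⊗ fterm 2 j ⊖ K2 ⊗ fterm 3 j) = (fun j => D j.+1 ⊖ D j).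
  by apply: functional_extensionality => j; exact: Tj.
rewrite (sum_tele _ ordD) /D fterm0 /R cnat0.
have -> : ps_opp ((w ⊗ w) ⊗ (((two ⊗ ps_const 0 ⊕ three) ⊗ X ⊖ three) ⊗ one))
  = ps_const 0 ⊖ ((w ⊗ w) ⊗ (((two ⊗ ps_const 0 ⊕ three) ⊗ X ⊖ three) ⊗ one)) by ring.
ring.
Qed.

Theorem mainTheorem4 :
  ps_mul (ps_poly (2%:P * (2%:P - 'X)))
         (ps_mul (ps_geom 1) (ps_mul (ps_geom 1) (ps_sum (fterm 2))))
  = ps_add (ps_mul (ps_const 3) (ps_geom 1))
           (ps_mul (ps_poly (1 - 'X))
                   (ps_mul (ps_geom 2) (ps_mul (ps_geom 2) (ps_sum (fterm 3))))).
Proof.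
rewrite ps_polyM !ps_polyB !ps_polyC ps_polyX ?ps_poly1 -/X.
have c2 : ps_const 2 = two by rewrite -cnat2.
have c3 : ps_const 3 = three by rewrite -cnat3.
rewrite c2 c3.
have h1 : (one ⊖ one ⊗ X) ⊗ ps_geom 1 = one by exact: geomP.
have h2 : w ⊗ ps_geom 2 = one by rewrite /w -c2; exact: geomP.
set g1 := ps_geom 1 in h1 *; set g2 := ps_geom 2 in h2 *.
set S2 := ps_sum (fterm 2); set S3 := ps_sum (fterm 3).
have E := Esum; rewrite -/S2 -/S3 in E.
clearbody g1 g2 S2 S3.
transitivity (two ⊗ (two ⊖ X) ⊗ (g1 ⊗ (g1 ⊗ S2)) ⊗ ((w ⊗ g2) ⊗ (w ⊗ g2))).
  rewrite h2; ring.
transitivity (g1 ⊗ g1 ⊗ g2 ⊗ g2 ⊗ (K1 ⊗ S2)); first ring.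
rewrite E.
have t1 : g1 ⊗ g1 ⊗ g2 ⊗ g2 ⊗ (K2 ⊗ S3) = (one ⊖ X) ⊗ (g2 ⊗ (g2 ⊗ S3)) ⊗ ((one ⊖ one ⊗ X) ⊗ g1) ⊗ ((one ⊖ one ⊗ X) ⊗ g1) by ring.
have t2 : g1 ⊗ g1 ⊗ g2 ⊗ g2 ⊗ (three ⊗ (one ⊖ X) ⊗ (w ⊗ w)) = three ⊗ g1 ⊗ ((one ⊖ one ⊗ X) ⊗ g1) ⊗ ((w ⊗ g2) ⊗ (w ⊗ g2)) by ring.
have q4 : g1 ⊗ g1 ⊗ g2 ⊗ g2 ⊗ (K2 ⊗ S3 ⊕ three ⊗ (one ⊖ X) ⊗ (w ⊗ w)) = g1 ⊗ g1 ⊗ g2 ⊗ g2 ⊗ (K2 ⊗ S3) ⊕ g1 ⊗ g1 ⊗ g2 ⊗ g2 ⊗ (three ⊗ (one ⊖ X) ⊗ (w ⊗ w)) by ring.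
rewrite q4 t1 t2 h1 h2.
have z1 : three ⊗ g1 ⊗ one ⊗ (one ⊗ one) = three ⊗ g1 by ring.
have z2 : (one ⊖ X) ⊗ (g2 ⊗ (g2 ⊗ S3)) ⊗ one ⊗ one = (one ⊖ X) ⊗ (g2 ⊗ (g2 ⊗ S3)) by ring.
rewrite z1 z2.
exact: (Radd_comm ps_ring).
Qed.
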